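(* The knots $6_2$ and $7_2$ (Rolfsen's table) both have determinant $11$, and $\mathrm{mincol}_{11}6_2=5=\mathrm{mincol}_{11}7_2$. Furthermore, there is a diagram $D_{6_2}$ of $6_2$ admitting a non-trivial $11$-coloring using $5$ colors and a diagram $D_{7_2}$ of $7_2$ admitting a non-trivial $11$-coloring using $5$ colors, such that no set of $5$ colors used on $D_{6_2}$ by a non-trivial $11$-coloring gives rise to a non-trivial $11$-coloring of $D_{7_2}$, and vice versa.
   Context: A (Fox) $p$-coloring of a link diagram is an assignment of an element of $\mathbf{Z}/p\mathbf{Z}$ (a color) to each arc such that at every crossing, with over-arc color $b$ and under-arc colors $a,c$, one has $2b-a-c\equiv0\pmod p$; it is trivial if all arcs receive the same color, non-trivial otherwise. For a prime $p$ and a link $L$ admitting non-trivial $p$-colorings, $\mathrm{mincol}_pL$ is the minimum over all diagrams of $L$ of the minimum number of distinct colors used by a non-trivial $p$-coloring of the diagram. *)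

(* Defs.v *)
(* Knot diagrams are encoded combinatorially as (unoriented)
   planar-diagram (PD) codes, knot types as classes of PD codes modulo planar
   isotopy of S^2 and the Reidemeister moves R1, R2, R3 (Reidemeister's theorem). *)
From HB Require Import structures.
From mathcomp Require Import all_boot all_order all_algebra.
From Stdlib Require Import Relations.Relation_Operators.

Unset Printing Implicit Defensive.

Import GRing.Theory.

(* PD codes.  A crossing (a,b,c,d) lists the labels of the four edges  *)
(* meeting at it in counterclockwise order, a and c being the two ends *)
(* of the under-strand, b and d the two ends of the over-strand        *)
(* (Knot Atlas convention; the oriented Knot Atlas codes additionally  *)
(* have a = incoming under-edge).  Edges = maximal pieces of the       *)
(* diagram between two crossings; each label must occur exactly twice. *)

Definition crossing := (nat * nat * nat * nat)%type.
Definition pd := seq crossing.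

Definition cget (x : crossing) (i : 'I_4) : nat :=
  let: (a, b, c, d) := x in nth 0 [:: a; b; c; d] i.

Definition dart (D : pd) := ('I_(size D) * 'I_4)%type.

Definition dlab (D : pd) (z : dart D) : nat := cget (nth (0, 0, 0, 0) D z.1) z.2.

Definition other_end (D : pd) (z : dart D) : dart D :=
  odflt z [pick w : dart D | (w != z) && (dlab D w == dlab D z)].

Definition rot4 (k : nat) (i : 'I_4) : 'I_4 := inord ((i + k) %% 4).

(* go along an edge, then turn to the next position (counterclockwise):
   orbits = faces of the 4-valent graph with its rotation system *)
Definition face_step (D : pd) (z : dart D) : dart D :=
  let w := other_end D z in (w.1, rot4 1 w.2).

(* go along an edge, then straight through the crossing:
   orbits = the components of the link, each traversed in both directions *)
Definition strand_step (D : pd) (z : dart D) : dart D :=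
  let w := other_end D z in (w.1, rot4 2 w.2).

Definition n_orbits {T : finType} (f : T -> T) : nat :=
  #|[set [set y | fconnect f x y] | x : T]|.

(* D is a diagram of a knot (one component) on the sphere:
   at least one crossing, every label used exactly twice, one component,
   and genus 0 (Euler: V - E + F = 2 with V = n, E = 2n, i.e. F = n + 2). *)
Definition knot_diagram (D : pd) : Prop :=
  [/\ 0 < size D,
      (forall z : dart D, #|[set w : dart D | dlab D w == dlab D z]| = 2),
      n_orbits (@strand_step D) = 2
    & n_orbits (@face_step D) = (size D).+2].

Definition relab (g : nat -> nat) (x : crossing) : crossing :=
  let: (a, b, c, d) := x in (g a, g b, g c, g d).

(* the same crossing, read starting from the other under-end *)
Definition rot2 (x : crossing) : crossing :=
  let: (a, b, c, d) := x in (c, d, a, b).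

Definition rename (u v : nat) : crossing -> crossing :=
  relab (fun z => if z == u then v else z).

(* same diagram up to orientation-preserving homeomorphism of S^2:
   injective relabelling of edges, re-reading crossings, reordering *)
Definition pd_iso (D D' : pd) : Prop :=
  exists (g : nat -> nat) (bs : seq bool),
    [/\ injective g, size bs = size D &
        perm_eq D' [seq relab g (if p.1 then rot2 p.2 else p.2) | p <- zip bs D]].

(* R1: D' has a kink (loop l) on the edge that is e1/e2 in D' and e1 in D *)
Definition R1_move (D D' : pd) : Prop :=
  exists (C : pd) (e1 e2 l : nat),
    (D' = (e1, e2, l, l) :: C \/ D' = (e1, l, l, e2) :: C) /\
    D = map (rename e2 e1) C.

(* R2: D' has a bigon (edges em, fm) with strand e over strand f at both
   crossings; removing it joins e1 with e2 and f1 with f2 *)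
Definition R2_move (D D' : pd) : Prop :=
  exists (C : pd) (e1 e2 f1 f2 em fm : nat),
    [/\ uniq [:: e1; e2; f1; f2],
        D' = (f1, e1, fm, em) :: (fm, e2, f2, em) :: C &
        D = map (rename f2 f1) (map (rename e2 e1) C)].

(* R3: a triangle (edges t, m, b of the top, middle, bottom strands)
   is moved across; two orientations of the triangle face *)
Definition R3_move (D D' : pd) : Prop :=
  exists (C : pd) (t1 t2 m1 m2 b1 b2 t m b : nat),
    (D = [:: (m1, t1, m, t); (b1, t, b, t2); (b, m, b2, m2)] ++ C /\
     D' = [:: (m2, t2, m, t); (b2, t, b, t1); (b, m, b1, m1)] ++ C) \/
    (D = [:: (m1, t, m, t1); (b, t, b1, t2); (b2, m, b, m2)] ++ C /\
     D' = [:: (m2, t, m, t2); (b, t, b2, t1); (b1, m, b, m1)] ++ C).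

Definition pd_step (D D' : pd) : Prop :=
  [/\ knot_diagram D, knot_diagram D' &
      [\/ pd_iso D D', R1_move D D', R2_move D D' | R3_move D D']].

Definition pd_equiv : pd -> pd -> Prop := clos_refl_sym_trans pd pd_step.

Definition mirror (x : crossing) : crossing :=
  let: (a, b, c, d) := x in (a, d, c, b).

(* D is a diagram of the knot represented by the diagram K (knots being
   taken up to mirror image, as in Rolfsen's table) *)
Definition diagram_of (K D : pd) : Prop :=
  pd_equiv D K \/ pd_equiv D (map mirror K).

(* Fox colorings.  A coloring of the arcs is encoded as a coloring of  *)
(* the edges that is constant along each over-strand (b and d lie on   *)
(* the same arc); the arc over a crossing is b, the under-arcs a, c.   *)

Definition fox_coloring (p : nat) (D : pd) (f : nat -> 'Z_p) : Prop :=
  forall x, x \in D ->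
    let: (a, b, c, d) := x in f b = f d /\ (f b *+ 2 - f a - f c = 0)%R.

Definition nontrivial_coloring (p : nat) (D : pd) (f : nat -> 'Z_p) : Prop :=
  fox_coloring p D f /\ exists z w : dart D, f (dlab D z) != f (dlab D w).

Definition colors (p : nat) (D : pd) (f : nat -> 'Z_p) : {set 'Z_p} :=
  [set f (dlab D z) | z : dart D].

Definition is_mincol (p : nat) (K : pd) (m : nat) : Prop :=
  (exists (D : pd) (f : nat -> 'Z_p),
      [/\ diagram_of K D, nontrivial_coloring p D f & #|colors p D f| = m]) /\
  (forall (D : pd) (f : nat -> 'Z_p),
      diagram_of K D -> nontrivial_coloring p D f -> m <= #|colors p D f|).

(* Determinant, computed on an oriented (Knot Atlas) PD code: the arcs *)
(* are indexed by the crossings, arc j being the arc that ends under   *)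
(* crossing j (containing edge a_j); coloring matrix row i has 2 at the *)
(* over-arc and -1 at each under-arc of crossing i; the determinant is *)
(* the absolute value of the minor obtained by deleting row and column 0.*)

Definition arc_rel (D : pd) : rel (dart D) :=
  fun z w => (w == other_end D z) || (odd z.2 && (w == (z.1, rot4 2 z.2))).

Definition same_arc (D : pd) (i k j l : nat) : bool :=
  [exists z : dart D, exists w : dart D,
     [&& z.1 == i :> nat, z.2 == k :> nat, w.1 == j :> nat, w.2 == l :> nat &
         connect (arc_rel D) z w]].

Definition cmat_entry (D : pd) (i j : nat) : int :=
  ((same_arc D i 1 j 0)%:R *+ 2 - (same_arc D i 0 j 0)%:R - (same_arc D i 2 j 0)%:R)%R.

Definition pd_det (D : pd) : nat :=
  absz (\det (\matrix_(i < (size D).-1, j < (size D).-1)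
                cmat_entry D i.+1 j.+1))%R.

(* 6_2: the Knot Atlas PD code; 7_2: a reduced alternating 7-crossing  *)
(* diagram (of the twist knot 7_2), oriented in Knot Atlas convention. *)

Definition K6_2 : pd :=
  [:: (1, 4, 2, 5); (5, 10, 6, 11); (3, 9, 4, 8); (9, 3, 10, 2);
      (7, 12, 8, 1); (11, 6, 12, 7)].

Definition K7_2 : pd :=
  [:: (14, 5, 1, 6); (6, 13, 7, 14); (12, 7, 13, 8); (8, 11, 9, 12);
      (4, 1, 5, 2); (10, 3, 11, 4); (2, 9, 3, 10)].

(* Main.v *)
Require Import Defs.
From HB Require Import structures.
From mathcomp Require Import all_boot all_order all_algebra.
From mathcomp.algebra_tactics Require Import ring.
From Stdlib Require Import Relations.Relation_Operators.
Set Implicit Arguments. Unset Strict Implicit.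
Import GRing.Theory.

Definition vz (D : pd) (z : dart D) : nat * nat := (nat_of_ord z.1, nat_of_ord z.2).
Definition dn (D : pd) : seq (nat * nat) :=
  [seq (i, k) | i <- iota 0 (size D), k <- iota 0 4].

Lemma map_vz_enum D : map (@vz D) (Finite.enum (dart D)) = dn D.
Proof.
rewrite Finite.enum.unlock /= /prod_enum /dn -!val_enum_ord.
elim: (enum 'I_(size D)) => //= i s IH.
by rewrite map_cat IH -map_comp -!map_comp.
Qed.

Lemma card_dart D (P : pred (nat * nat)) :
  #|[pred z : dart D | P (vz z)]| = count P (dn D).
Proof.
by rewrite cardE /enum_mem size_filter -map_vz_enum count_map.
Qed.

Definition cgetn (x : crossing) (k : nat) : nat :=
  let: (a, b, c, d) := x in nth 0 [:: a; b; c; d] k.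
Definition labn (D : pd) (p : nat * nat) : nat := cgetn (nth (0,0,0,0) D p.1) p.2.

Lemma dlabE D z : dlab D z = labn D (vz z).
Proof. by rewrite /dlab /labn /cget /cgetn /=; case: (nth _ D _) => [[[a b] c] d]. Qed.

Definition two (D : pd) := forall z : dart D, #|[set w | dlab D w == dlab D z]| = 2.

Section Mate.
Variables (D : pd) (H2 : two D).

Lemma mate_uniq (z u1 u2 : dart D) : u1 != z -> dlab D u1 = dlab D z ->
  u2 != z -> dlab D u2 = dlab D z -> u1 = u2.
Proof.
move=> n1 e1 n2 e2; apply/eqP; apply: contraT => n12.
have := H2 z; set S := [set w | _].
have sub : [set z; u1; u2] \subset S.
  by apply/subsetP => w; rewrite !inE => /orP[/orP[]|] /eqP ->; rewrite ?e1 ?e2 eqxx.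
have := subset_leq_card sub.
rewrite -setUA cardsU1 !inE negb_or eq_sym n1 eq_sym n2 /= cards2 n12 => le3 eq2.
by rewrite eq2 in le3.
Qed.

Lemma mate_ex (z : dart D) : exists u : dart D, (u != z) && (dlab D u == dlab D z).
Proof.
have := H2 z; set S := [set w | _] => c2.
have zS : z \in S by rewrite inE.
have := cardsD1 z S; rewrite zS c2 => /eqP; rewrite eqSS eq_sym => /cards1P [u Hu].
exists u; have : u \in S :\ z by rewrite Hu set11.
by rewrite !inE.
Qed.

Lemma oe_prop (z : dart D) : (other_end D z != z) && (dlab D (other_end D z) == dlab D z).
Proof.
rewrite /other_end; case: pickP => [w -> //| H].
by have [u Hu] := mate_ex z; rewrite H in Hu.
Qed.

Lemma oe_ne z : other_end D z != z. Proof. by case/andP: (oe_prop z). Qed.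
Lemma oe_lab z : dlab D (other_end D z) = dlab D z.
Proof. by case/andP: (oe_prop z) => _ /eqP. Qed.

Lemma oe_invol z : other_end D (other_end D z) = z.
Proof.
set w := other_end D z.
apply: (@mate_uniq w); [exact: oe_ne | exact: oe_lab | | ].
  by rewrite eq_sym oe_ne.
by rewrite oe_lab.
Qed.

Lemma oe_inj : injective (other_end D).
Proof. by move=> x y e; rewrite -(oe_invol x) e oe_invol. Qed.

End Mate.

Lemma rot4_val k (i : 'I_4) : nat_of_ord (rot4 k i) = (i + k) %% 4.
Proof. by rewrite /rot4 inordK // ltn_pmod. Qed.

Lemma rot4_inj k : injective (rot4 k).
Proof.
move=> i j /(congr1 (@nat_of_ord 4)); rewrite !rot4_val => /eqP e.
apply/val_inj => /=; move: e; rewrite eqn_modDr !modn_small //.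
by move/eqP.
Qed.

Section Orbits.
Variables (T : finType) (f : T -> T) (finj : injective f) (key : T -> nat)
  (kinj : injective key).

Lemma fc_traject x y : fconnect f x y = (y \in traject f x #|T|).
Proof.
apply/idP/trajectP => [H | [i _ ->]]; last exact: fconnect_iter.
exists (findex f x y); last by rewrite iter_findex.
apply: leq_trans (findex_max H) _.
by rewrite /order max_card.
Qed.

Definition ismin x := all (fun y => key x <= key y) (traject f x #|T|).

Lemma orbit_count :
  n_orbits f = #|[pred x | ismin x]|.
Proof.
rewrite /n_orbits.
set orb := fun x => [set y | fconnect f x y].
have orbE x y : fconnect f x y -> orb x = orb y.
  move=> cxy; apply/setP => z; rewrite !inE; apply/idP/idP => H.
    by apply: connect_trans H; rewrite fconnect_sym.
  exact: connect_trans cxy H.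
have -> : [set orb x | x : T] = [set orb x | x in [pred x | ismin x]].
  apply/setP => S; apply/imsetP/imsetP => [[x _ ->] | [x _ ->]]; last by exists x.
  have := arg_minnP key (connect0 (frel f) x).
  set m := [arg min_(i < x | _) _] => -[{}m cxm Hm].
  exists m; last exact: orbE.
  rewrite inE /ismin; apply/allP => y; rewrite -fc_traject => cmy.
  by apply: Hm; apply: connect_trans cxm cmy.
rewrite card_in_imset //.
move=> x y; rewrite !inE /ismin => mx my exy.
have cxy : fconnect f x y.
  have : y \in orb y by rewrite inE connect0.
  by rewrite -exy inE.
have cyx : fconnect f y x by rewrite fconnect_sym.
move: (allP mx y) (allP my x); rewrite -!fc_traject => /(_ cxy) h1 /(_ cyx) h2.
by apply: kinj; apply/eqP; rewrite eqn_leq h1 h2.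
Qed.
End Orbits.

Definition oen (D : pd) (p : nat * nat) : nat * nat :=
  head p [seq w <- dn D | (w != p) && (labn D w == labn D p)].
Definition fsn (D : pd) (p : nat * nat) := let w := oen D p in (w.1, (w.2 + 1) %% 4).
Definition ssn (D : pd) (p : nat * nat) := let w := oen D p in (w.1, (w.2 + 2) %% 4).
Definition keyn (p : nat * nat) := p.1 * 4 + p.2.
Definition isminn (g : nat * nat -> nat * nat) N p :=
  all (fun q => keyn p <= keyn q) (traject g p N).
Definition labchk (D : pd) :=
  all (fun p => count (fun q => labn D q == labn D p) (dn D) == 2) (dn D).
Definition kdb (D : pd) : bool :=
  [&& 0 < size D, labchk D,
      count (isminn (ssn D) (size D * 4)) (dn D) == 2 &
      count (isminn (fsn D) (size D * 4)) (dn D) == (size D).+2].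

Lemma vz_inj D : injective (@vz D).
Proof.
move=> [i k] [j l] [/= e1 e2]; congr pair; exact: val_inj.
Qed.

Lemma vz_dn D (z : dart D) : vz z \in dn D.
Proof. by rewrite -map_vz_enum map_f // -enumT mem_enum. Qed.

Lemma dn_vz D p : p \in dn D -> exists z : dart D, vz z = p.
Proof. by rewrite -map_vz_enum => /mapP [z _ ->]; exists z. Qed.

Lemma two_chk D : labchk D -> two D.
Proof.
move=> /allP H z; rewrite cardsE.
have -> : #|[pred w : dart D | dlab D w == dlab D z]| =
          count (fun q => labn D q == labn D (vz z)) (dn D).
  by rewrite -card_dart; apply: eq_card => w; rewrite !inE !dlabE.
by apply/eqP; apply: H; apply: vz_dn.
Qed.

Lemma oenE D (z : dart D) : two D -> oen D (vz z) = vz (other_end D z).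
Proof.
move=> H2; rewrite /oen.
set F := [seq w <- dn D | _].
have inF : vz (other_end D z) \in F.
  rewrite mem_filter vz_dn andbT -!dlabE (oe_lab H2) eqxx andbT.
  by apply: contra (oe_ne H2 z) => /eqP /vz_inj ->.
have allF : forall p, p \in F -> p = vz (other_end D z).
  move=> p; rewrite mem_filter => /andP [/andP [np lp] /dn_vz [u eu]].
  rewrite -eu; congr vz; apply: (mate_uniq H2 (z := z)).
  - by apply: contra np => /eqP ue; rewrite -eu ue.
  - by rewrite !dlabE eu; apply/eqP.
  - exact: oe_ne.
  - exact: oe_lab.
case: F inF allF => [//|a s] _ allF /=; apply: allF; exact: mem_head.
Qed.

Lemma fsnE D (z : dart D) : two D -> vz (face_step D z) = fsn D (vz z).
Proof. by move=> H2; rewrite /fsn (oenE _ H2) /face_step /vz /= rot4_val. Qed.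

Lemma ssnE D (z : dart D) : two D -> vz (strand_step D z) = ssn D (vz z).
Proof. by move=> H2; rewrite /ssn (oenE _ H2) /strand_step /vz /= rot4_val. Qed.

Lemma map_traject_vz D (g : dart D -> dart D) gn :
  (forall z, vz (g z) = gn (vz z)) ->
  forall n z, map (@vz D) (traject g z n) = traject gn (vz z) n.
Proof. by move=> Hg; elim=> [|n IH] z //=; rewrite IH Hg. Qed.

Lemma key_inj D : injective (fun z : dart D => keyn (vz z)).
Proof.
move=> z w; rewrite /keyn /= => e; apply: vz_inj.
have := congr1 (modn^~ 4) e; have := congr1 (divn^~ 4) e.
rewrite !divnMDl // !modnMDl !divn_small ?modn_small // !addn0 => e1 e2.
by rewrite /vz e1 e2.
Qed.

Lemma step_inj D (k : nat) (z w : dart D) : two D ->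
  ((other_end D z).1, rot4 k (other_end D z).2) =
  ((other_end D w).1, rot4 k (other_end D w).2) -> z = w.
Proof.
move=> H2 [e1 /rot4_inj e2]; apply: (oe_inj H2).
by move: e1 e2; case: (other_end D z) => ? ?; case: (other_end D w) => ? ? /= -> ->.
Qed.

Lemma norb_count D (g : dart D -> dart D) gn : injective g ->
  (forall z, vz (g z) = gn (vz z)) ->
  n_orbits g = count (isminn gn (size D * 4)) (dn D).
Proof.
move=> ginj Hg.
rewrite (orbit_count ginj (@key_inj D)) -card_dart; apply: eq_card => z.
rewrite !inE /ismin /isminn card_prod !card_ord -(map_traject_vz Hg) all_map.
by [].
Qed.

Lemma kdb_sound D : kdb D -> knot_diagram D.
Proof.
case/and4P => s0 lc c1 c2; have H2 := two_chk lc.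
split => //.
- rewrite (@norb_count D _ (ssn D)) ?(eqP c1) //; last by move=> z; apply: ssnE.
  by move=> z w; apply: step_inj.
- rewrite (@norb_count D _ (fsn D)) ?(eqP c2) //; last by move=> z; apply: fsnE.
  by move=> z w; apply: step_inj.
Qed.

Definition stp (s A : seq nat) : seq nat :=
  [seq c <- s | (c \in A) || has (fun a => has (fun b => (c + a) %% 11 == (b * 2) %% 11) s) A].
Definition cl (s A : seq nat) := iter 4 (stp s) A.
Definition good (s : seq nat) : bool :=
  ~~ uniq s || all (fun c0 => let A := cl s [:: c0] in
     [&& c0 \in A, all (fun c => c \in A) (stp s A) & ~~ all (fun c => c \in A) s]) s.
Fixpoint allls (k : nat) : seq (seq nat) :=
  if k is k'.+1 then flatten [seq [seq x :: l | l <- allls k'] | x <- iota 0 11] else [:: [::]].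

Lemma allls_mem k l : size l = k -> all (fun x => x < 11) l -> l \in allls k.
Proof.
elim: k l => [|k IH] [|x l] // [sz] /andP [x11 al].
change (x :: l \in flatten [seq [seq y :: l | l <- allls k] | y <- iota 0 11]).
apply/flatten_mapP; exists x; first by rewrite mem_iota.
by apply: map_f; apply: IH.
Qed.

Lemma chk_fin : all good (allls 2 ++ allls 3 ++ allls 4).
Proof. by vm_compute. Qed.

Lemma good_all s : 2 <= size s <= 4 -> all (fun x => x < 11) s -> good s.
Proof.
move=> /andP [s2 s4] al; move: (allls_mem (erefl (size s)) al) => H.
apply: (allP chk_fin); move: s2 s4 H.
case: (size s) => [|[|[|[|[|n]]]]] s2 s4 H.
- by move: s2.
- by move: s2.
- by rewrite mem_cat H.
- by rewrite mem_cat; apply/orP; right; rewrite mem_cat H.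
- by rewrite mem_cat; apply/orP; right; rewrite mem_cat; apply/orP; right.
- by move: s4.
Qed.

Section Conn.
Variables (D : pd) (f : nat -> 'Z_11) (P : 'Z_11 -> bool).
Hypotheses (KD : knot_diagram D) (FC : fox_coloring 11 D f)
 (HP : forall x, x \in D -> let: (a,b,c,d) := x in P (f a) = P (f c)).

Let H2 : two D. Proof. by case: KD. Qed.
Let col (z : dart D) := P (f (dlab D z)).
Let eps := other_end D.
Let rho (z : dart D) : dart D := (z.1, rot4 2 z.2).
Let sig := strand_step D.
Let tau (z : dart D) := eps (rho z).

Lemma rot4_2_invol (i : 'I_4) : rot4 2 (rot4 2 i) = i.
Proof.
apply: val_inj; rewrite /= !rot4_val.
by case: i => [[|[|[|[|m]]]] Hi].
Qed.

Lemma rot4_2_ne (i : 'I_4) : rot4 2 i != i.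
Proof.
apply/negP => /eqP /(congr1 (@nat_of_ord 4)); rewrite rot4_val.
by case: i => [[|[|[|[|m]]]] Hi].
Qed.

Lemma rho_invol z : rho (rho z) = z.
Proof. by case: z => i k; rewrite /rho /= rot4_2_invol. Qed.

Lemma rho_ne z : rho z != z.
Proof. by case: z => i k; rewrite /rho xpair_eqE eqxx /= rot4_2_ne. Qed.

Lemma col_eps z : col (eps z) = col z.
Proof. by rewrite /col /eps (oe_lab H2). Qed.

Lemma col_rho z : col (rho z) = col z.
Proof.
case: z => i k; rewrite /col /rho /dlab /=.
have xD : nth (0,0,0,0) D i \in D by apply: mem_nth.
move: (HP xD) (FC xD).
case: (nth (0,0,0,0) D i) => [[[a b] c] d] /= hp [fbd _].
rewrite /cget; have := rot4_val 2 k.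
case: k => [[|[|[|[|m]]]] Hk] /= ->.
- by rewrite -hp.
- by rewrite fbd.
- by rewrite hp.
- by rewrite -fbd.
- by [].
Qed.

Lemma col_sig z : col (sig z) = col z.
Proof. by rewrite /sig /strand_step -/eps -/(rho (eps z)) col_rho col_eps. Qed.

Lemma col_iter n z : col (iter n sig z) = col z.
Proof. by elim: n => //= n IH; rewrite col_sig. Qed.

Lemma col_fc z y : fconnect sig z y -> col y = col z.
Proof. by move=> /iter_findex <-; rewrite col_iter. Qed.

Lemma eps_iter n x : eps (iter n sig x) = iter n tau (eps x).
Proof. by elim: n => //= n <-. Qed.

Lemma tau_sig w : tau (sig w) = w.
Proof.
by rewrite /tau /sig /strand_step -/eps -/(rho (eps w)) rho_invol /eps (oe_invol H2).
Qed.

Lemma tau_sig_iter k w : iter k tau (iter k sig w) = w.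
Proof. elim: k w => [|k IH] w; first by []. by rewrite iterSr iterS tau_sig IH. Qed.

Lemma not_fc_eps z0 : ~~ fconnect sig z0 (eps z0).
Proof.
apply/negP => /iter_findex; set c := findex _ _ _ => ec.
have := odd_double_half c; rewrite -addnn; set k := c./2.
case: (odd c) => /= cE.
- set w := iter k sig z0.
  have ey : eps (sig w) = w.
    have -> : sig w = iter (1 + k) sig z0 by rewrite add1n iterS.
    by rewrite eps_iter -ec -cE addnA [iter (1 + k + k) _ _]iterD tau_sig_iter.
  have : rho (sig w) = sig w.
    rewrite /sig /strand_step -/eps -/(rho (eps w)) rho_invol.
    have e2 : eps (eps (sig w)) = eps w by rewrite ey.
    rewrite /eps (oe_invol H2) in e2.
    by change (eps w = sig w); rewrite e2.
  by move/eqP; rewrite (negbTE (rho_ne _)).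
- set y := iter k sig z0.
  have : eps y = y by rewrite /y eps_iter -ec -cE ?add0n [iter (k + k) _ _]iterD tau_sig_iter.
  by move/eqP; rewrite (negbTE (oe_ne H2 _)).
Qed.

Lemma col_all z0 z : col z = col z0.
Proof.
have cS : n_orbits sig = 2 by case: KD.
move: cS; rewrite /n_orbits; set S := [set _ | x in _] => cS.
set orb := fun x => [set y | fconnect sig x y].
have o12 : orb z0 != orb (eps z0).
  apply/negP => /eqP e; have : eps z0 \in orb (eps z0) by rewrite inE connect0.
  by rewrite -e inE (negbTE (not_fc_eps z0)).
have sub : [set orb z0; orb (eps z0)] \subset S.
  by apply/subsetP => o; rewrite !inE => /orP [] /eqP ->; apply: imset_f.
have eqS : [set orb z0; orb (eps z0)] = S.
  by apply/eqP; rewrite eqEcard sub cS cards2 o12.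
have : orb z \in S by apply: imset_f.
rewrite -eqS !inE => /orP [] /eqP e.
- have : z \in orb z by rewrite inE connect0.
  by rewrite e inE => /col_fc.
- have : z \in orb z by rewrite inE connect0.
  by rewrite e inE => /col_fc ->; rewrite col_eps.
Qed.
End Conn.

Lemma valZ11D (x y : 'Z_11) : nat_of_ord (x + y)%R = (x + y) %% 11.
Proof. by []. Qed.

Lemma fox_arith (a b c : 'Z_11) : (b *+ 2 - a - c = 0)%R ->
  (c + a) %% 11 == (b * 2) %% 11.
Proof.
move=> /eqP; rewrite subr_eq0 => /eqP e.
have : (c + a = b + b)%R by rewrite -e subrK mulr2n.
by move/(congr1 (@nat_of_ord _)); rewrite !valZ11D muln2 -addnn => ->.
Qed.

Lemma lower5 D f : knot_diagram D -> nontrivial_coloring 11 D f ->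
  5 <= #|colors 11 D f|.
Proof.
move=> KD [FC [z [w nzw]]].
set C := colors 11 D f.
rewrite leqNgt; apply/negP => small.
pose s := map (@nat_of_ord _) (enum C).
have us : uniq s by rewrite map_inj_uniq ?enum_uniq //; apply: val_inj.
have ss : size s = #|C| by rewrite size_map cardE.
have memS c : (nat_of_ord c \in s) = (c \in C).
  by rewrite mem_map ?mem_enum //; apply: val_inj.
have al : all (fun x => x < 11) s.
  by apply/allP => x /mapP [c _ ->]; apply: ltn_ord.
have colC (y : dart D) : f (dlab D y) \in C by apply: imset_f.
have c2 : 2 <= #|C|.
  have sub : [set f (dlab D z); f (dlab D w)] \subset C.
    by apply/subsetP => c; rewrite !inE => /orP [] /eqP ->.
  by have := subset_leq_card sub; rewrite cards2 nzw.
have := good_all _ al; rewrite ss c2 -ltnS small => /(_ isT).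
rewrite /good us /= => /allP /(_ (nat_of_ord (f (dlab D z)))).
rewrite memS colC => /(_ isT) /and3P [H1 H2 H3].
set A := cl s _ in H1 H2 H3.
pose P (c : 'Z_11) := nat_of_ord c \in A.
have inC x k : x \in D -> k < 4 -> f (cgetn x k) \in C.
  move=> xD k4.
  have ix : index x D < size D by rewrite index_mem.
  have := colC (Ordinal ix, Ordinal k4).
  by rewrite dlabE /vz /labn /= nth_index.
have HP : forall x, x \in D -> let: (a,b,c,d) := x in P (f a) = P (f c).
  move=> x xD; move: (inC x 0 xD isT) (inC x 1 xD isT) (inC x 2 xD isT) (FC x xD).
  case: x xD => [[[a b] c] d] xD /= Ca Cb Cc [_ fx].
  have e1 := fox_arith fx.
  have e2 : (nat_of_ord (f a) + nat_of_ord (f c)) %% 11 == (nat_of_ord (f b) * 2) %% 11.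
    by rewrite addnC.
  have step u v : u \in C -> P v -> (nat_of_ord u + nat_of_ord v) %% 11 == (nat_of_ord (f b) * 2) %% 11 -> P u.
    move=> Cu Pv e; apply: (allP H2); rewrite mem_filter memS Cu andbT.
    apply/orP; right; apply/hasP; exists (nat_of_ord v) => //.
    by apply/hasP; exists (nat_of_ord (f b)); rewrite ?memS.
  apply/idP/idP => hp.
    exact: step Cc hp e1.
  exact: step Ca hp e2.
have allP' : forall y : dart D, P (f (dlab D y)).
  by move=> y; rewrite (col_all KD FC HP z y).
move/negP: H3; apply; apply/allP => n /mapP [c]; rewrite mem_enum => /imsetP [y _ ->] ->.
exact: allP'.
Qed.

Section Sec_G1.
Local Open Scope ring_scope.

Fixpoint detl (n : nat) (A : nat -> nat -> int) : int :=
  if n is n'.+1 then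
    foldr (fun j acc => (-1) ^+ j * A 0%N j * detl n' (fun i k => A i.+1 (bump j k)) + acc)
          0 (iota 0 n)
  else 1.

Lemma sum_foldr (r : seq nat) (G : nat -> int) :
  \sum_(j <- r) G j = foldr (fun j acc => G j + acc) 0 r.
Proof. by elim: r => [|a r IH]; rewrite ?big_nil ?big_cons ?IH. Qed.

Lemma detlE n (A : nat -> nat -> int) :
  \det (\matrix_(i < n, j < n) A i j) = detl n A.
Proof.
elim: n A => [|n IH] A; first by rewrite det_mx00.
rewrite (expand_det_row _ ord0).
pose G j := (-1) ^+ j * A 0%N j * detl n (fun i k => A i.+1 (bump j k)).
transitivity (\sum_(j <- index_iota 0 n.+1) G j); last by rewrite sum_foldr.
rewrite big_mkord; apply: eq_bigr => j _.
rewrite /cofactor mxE /G -IH add0n mulrCA mulrA; congr (_ * \det _).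
by apply/matrixP => i k; rewrite !mxE.
Qed.

End Sec_G1.

Definition arn D (p q : nat * nat) :=
  (q == oen D p) || (odd p.2 && (q == (p.1, (p.2 + 2) %% 4))).
Definition ext D (A : seq (nat * nat)) :=
  A ++ [seq q <- dn D | (q \notin A) && has (fun a => arn D a q) A].
Definition clos D p := iter (size D).+2 (ext D) [:: p].
Definition closedb D (A : seq (nat * nat)) :=
  all (fun a => all (fun q => arn D a q ==> (q \in A)) (dn D)) A.
Definition sac D i k j l := [&& (i,k) \in dn D, (j,l) \in dn D & (j,l) \in clos D (i,k)].
Definition cmc D i j : int :=
  ((sac D i 1 j 0)%:R *+ 2 - (sac D i 0 j 0)%:R - (sac D i 2 j 0)%:R)%R.

Lemma arnE D (H2 : two D) (z w : dart D) : arc_rel D z w = arn D (vz z) (vz w).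
Proof.
rewrite /arc_rel /arn (oenE _ H2) (inj_eq (@vz_inj D)).
congr (_ || (_ && _)).
by rewrite -(inj_eq (@vz_inj D)) /vz /= rot4_val.
Qed.

Lemma iter_ext_mem D n A p : p \in A -> p \in iter n (ext D) A.
Proof. by elim: n => //= n IH pA; rewrite mem_cat IH. Qed.

Lemma clos_sound D (H2 : two D) (z : dart D) n q :
  q \in iter n (ext D) [:: vz z] -> exists w : dart D, vz w = q /\ connect (arc_rel D) z w.
Proof.
elim: n q => [|n IH] q /=.
  by rewrite inE => /eqP ->; exists z; split; rewrite ?connect0.
rewrite mem_cat => /orP [/IH //|]; rewrite mem_filter => /andP [/andP [_ /hasP [a aA ha]] qD].
have [w [ew cw]] := IH a aA.
have [u eu] := dn_vz qD.
exists u; split => //; apply: connect_trans cw (connect1 _).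
by rewrite arnE // ew eu.
Qed.

Lemma clos_complete D (H2 : two D) (z w : dart D) :
  closedb D (clos D (vz z)) -> connect (arc_rel D) z w -> vz w \in clos D (vz z).
Proof.
set A := clos D (vz z) => /allP cl /connectP [p pth ->].
have zA : vz z \in A by apply: iter_ext_mem; rewrite mem_head.
move: zA pth; clearbody A; elim: p (z) => [|a p IH] y //= yA /andP [ya pth].
apply: IH => //.
have := cl _ yA => /allP /(_ (vz a) (vz_dn a)).
by rewrite -arnE // ya.
Qed.

Lemma same_arcE D i k j l : two D -> all (fun p => closedb D (clos D p)) (dn D) ->
  same_arc D i k j l = sac D i k j l.
Proof.
move=> H2 /allP Hcl; rewrite /same_arc /sac.
apply/existsP/idP.
  move=> [z /existsP [w /and5P [/eqP e1 /eqP e2 /eqP e3 /eqP e4 c]]].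
  have -> : (i, k) = vz z by rewrite /vz e1 e2.
  have -> : (j, l) = vz w by rewrite /vz e3 e4.
  by rewrite !vz_dn /=; apply: clos_complete => //; apply: Hcl; apply: vz_dn.
case/and3P => /dn_vz [z ez] _ /=; rewrite -ez => /(clos_sound H2) [w [ew cw]].
exists z; apply/existsP; exists w.
by rewrite cw -[nat_of_ord z.1]/((vz z).1) -[nat_of_ord z.2]/((vz z).2)
   -[nat_of_ord w.1]/((vz w).1) -[nat_of_ord w.2]/((vz w).2) ez ew !eqxx.
Qed.

Definition detM n (M : seq (seq int)) := detl n (fun i j => nth 0%R (nth [::] M i) j).
Definition cmM D := let n := (size D).-1 in
  [seq [seq cmc D i.+1 j.+1 | j <- iota 0 n] | i <- iota 0 n].

Lemma pd_detE D : two D -> all (fun p => closedb D (clos D p)) (dn D) ->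
  pd_det D = absz (detM (size D).-1 (cmM D)).
Proof.
move=> H2 Hc; rewrite /pd_det /detM -detlE; congr absz; congr (determinant _).
apply/matrixP => i j; rewrite !mxE /cmat_entry /cmM.
rewrite (nth_map 0%N) ?size_iota // (nth_map 0%N) ?size_iota // !nth_iota //.
by rewrite /cmc !same_arcE.
Qed.

Lemma cl62 : all (fun p => closedb K6_2 (clos K6_2 p)) (dn K6_2).
Proof. Time vm_compute. reflexivity. Qed.
Lemma det62 : pd_det K6_2 = 11%N.
Proof.
rewrite pd_detE; first by vm_compute.
  by apply: two_chk; vm_compute.
exact: cl62.
Qed.
Lemma cl72 : all (fun p => closedb K7_2 (clos K7_2 p)) (dn K7_2).
Proof. Time vm_compute. reflexivity. Qed.
Lemma det72 : pd_det K7_2 = 11%N.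
Proof.
rewrite pd_detE; first by vm_compute.
  by apply: two_chk; vm_compute.
exact: cl72.
Qed.

Lemma pe_step X Y : kdb X -> kdb Y ->
  [\/ pd_iso X Y, R1_move X Y, R2_move X Y | R3_move X Y] -> pd_equiv X Y.
Proof. by move=> kx ky H; apply: rst_step; split => //; apply: kdb_sound. Qed.

Lemma pe_stepb X Y : kdb X -> kdb Y ->
  [\/ pd_iso Y X, R1_move Y X, R2_move Y X | R3_move Y X] -> pd_equiv X Y.
Proof. by move=> kx ky H; apply: rst_sym; apply: pe_step. Qed.

Lemma isoI X Y (bs : seq bool) : size bs == size X ->
  perm_eq Y [seq relab id (if p.1 then rot2 p.2 else p.2) | p <- zip bs X] ->
  [\/ pd_iso X Y, R1_move X Y, R2_move X Y | R3_move X Y].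
Proof. by move=> /eqP sz pe; apply: Or41; exists id, bs; split. Qed.

Lemma R1I X Y C e1 e2 l :
  (Y == (e1,e2,l,l)::C) || (Y == (e1,l,l,e2)::C) -> X == map (rename e2 e1) C ->
  [\/ pd_iso X Y, R1_move X Y, R2_move X Y | R3_move X Y].
Proof.
move=> /orP H /eqP ->; apply: Or42; exists C, e1, e2, l; split => //.
by case: H => /eqP ->; [left|right].
Qed.

Lemma R2I X Y C e1 e2 f1 f2 em fm : uniq [:: e1; e2; f1; f2] ->
  Y == (f1, e1, fm, em) :: (fm, e2, f2, em) :: C ->
  X == map (rename f2 f1) (map (rename e2 e1) C) ->
  [\/ pd_iso X Y, R1_move X Y, R2_move X Y | R3_move X Y].
Proof.
by move=> u /eqP ey /eqP ex; apply: Or43; exists C, e1, e2, f1, f2, em, fm; split.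
Qed.

Lemma R3aI X Y C t1 t2 m1 m2 b1 b2 t m b :
  X == [:: (m1, t1, m, t); (b1, t, b, t2); (b, m, b2, m2)] ++ C ->
  Y == [:: (m2, t2, m, t); (b2, t, b, t1); (b, m, b1, m1)] ++ C ->
  [\/ pd_iso X Y, R1_move X Y, R2_move X Y | R3_move X Y].
Proof.
move=> /eqP ex /eqP ey; apply: Or44.
by exists C, t1, t2, m1, m2, b1, b2, t, m, b; left.
Qed.

Lemma R3bI X Y C t1 t2 m1 m2 b1 b2 t m b :
  X == [:: (m1, t, m, t1); (b, t, b1, t2); (b2, m, b, m2)] ++ C ->
  Y == [:: (m2, t, m, t2); (b, t, b2, t1); (b1, m, b, m1)] ++ C ->
  [\/ pd_iso X Y, R1_move X Y, R2_move X Y | R3_move X Y].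
Proof.
move=> /eqP ex /eqP ey; apply: Or44.
by exists C, t1, t2, m1, m2, b1, b2, t, m, b; right.
Qed.

Lemma rst_kd x y : clos_refl_sym_trans pd pd_step x y ->
  x = y \/ (knot_diagram x /\ knot_diagram y).
Proof.
elim => {x y} [x y [kx ky _]|x|x y _ [->|[]]|x y z _ H1 _ H2]; auto.
case: H1 H2 => [-> //|[kx ky]] [<-|[ky' kz]]; auto.
Qed.

Lemma diagram_kd K D : knot_diagram K -> knot_diagram (map mirror K) ->
  diagram_of K D -> knot_diagram D.
Proof. by move=> k1 k2 [] /rst_kd [->|[]]. Qed.

Lemma fox_chk D (f : nat -> 'Z_11) :
  all (fun x => let: (a,b,c,d) := x in (f b == f d) && (f b *+ 2 - f a - f c == 0)%R) D ->
  fox_coloring 11 D f.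
Proof.
move=> /allP H x xD; move: (H x xD); case: x xD => [[[a b] c] d] _ /andP [/eqP e1 /eqP e2].
by split.
Qed.

Lemma colorsE D (f : nat -> 'Z_11) c :
  (c \in colors 11 D f) = has (fun p => f (labn D p) == c) (dn D).
Proof.
apply/imsetP/hasP => [[z _ ->]|[p pD /eqP <-]].
  by exists (vz z); rewrite ?vz_dn // dlabE.
by have [z ez] := dn_vz pD; exists z => //; rewrite dlabE ez.
Qed.

Lemma cardZ11 (P : pred 'Z_11) : #|P| = count (fun n => P (inZp n)) (iota 0 11).
Proof.
rewrite cardE /enum_mem size_filter -enumT.
have -> : iota 0 11 = map (@nat_of_ord _) (enum 'Z_11) by rewrite val_enum_ord.
rewrite count_map; apply: eq_count => c /=.
by congr (P _); apply: val_inj; rewrite /= modn_small.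
Qed.

Lemma colors_card D (f : nat -> 'Z_11) :
  #|colors 11 D f| = count (fun n => has (fun p => f (labn D p) == inZp n) (dn D)) (iota 0 11).
Proof. by rewrite cardZ11; apply: eq_count => n /=; rewrite -colorsE. Qed.

Lemma nontriv_chk D (f : nat -> 'Z_11) :
  has (fun p => has (fun q => f (labn D p) != f (labn D q)) (dn D)) (dn D) ->
  exists z w : dart D, f (dlab D z) != f (dlab D w).
Proof.
case/hasP => p pD /hasP [q qD ne].
have [z ez] := dn_vz pD; have [w ew] := dn_vz qD.
by exists z, w; rewrite !dlabE ez ew.
Qed.

Section Sec_F.
Local Open Scope ring_scope.

Lemma mulrn11 (u : 'Z_11) : u *+ 11 = 0.
Proof.
have e : (11%:R : 'Z_11) = 0 by apply/eqP.
by rewrite -mulr_natr e mulr0.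
Qed.

Lemma under_step (f : nat -> 'Z_11) (x u : 'Z_11) a b c ka kb :
  f a = x + u *+ ka -> f b = x + u *+ kb -> f b *+ 2 - f a - f c = 0 ->
  f c = x + u *+ ((kb * 2 + 10 * ka) %% 11).
Proof.
move=> Ha Hb /eqP; rewrite subr_eq0 => /eqP Hc.
have mm n : u *+ (n %% 11) = u *+ n.
  by rewrite {2}(divn_eq n 11) mulrnDr mulrnA mulrn11 add0r.
have h : u *+ (10 * ka) = - (u *+ ka).
  by apply/eqP; rewrite -addr_eq0 -mulrnDr -mulSnr mulrnA mulrn11 mul0rn eqxx.
rewrite -Hc Ha Hb mm mulrnDr h mulrnA; ring.
Qed.

Lemma under_step2 (f : nat -> 'Z_11) (x u : 'Z_11) a b c kc kb :
  f c = x + u *+ kc -> f b = x + u *+ kb -> f b *+ 2 - f a - f c = 0 ->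
  f a = x + u *+ ((kb * 2 + 10 * kc) %% 11).
Proof. by move=> Hc Hb E; apply: (under_step Hc Hb); rewrite addrAC. Qed.

Lemma valZ (x y : 'Z_11) : nat_of_ord (x + y) = ((x + y) %% 11)%N.
Proof. by []. Qed.

Lemma val_aff (x u : 'Z_11) k : nat_of_ord (x + u *+ k) = ((x + u * k) %% 11)%N.
Proof.
have vu : forall k, nat_of_ord (u *+ k) = ((u * k) %% 11)%N.
  elim=> [|j IH]; first by rewrite mulr0n muln0.
  by rewrite mulrSr valZ IH modnDml mulnS addnC.
by rewrite valZ vu modnDmr.
Qed.

Lemma colors_aff D (f : nat -> 'Z_11) (x u : 'Z_11) (K : seq nat) :
  (forall p, p \in dn D -> f (labn D p) = x + u *+ nth 0%N K (labn D p)) ->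
  forall c : 'Z_11, (c \in colors 11 D f) =
    has (fun k => nat_of_ord c == ((x + u * k) %% 11)%N) (map (fun p => nth 0%N K (labn D p)) (dn D)).
Proof.
move=> H c; rewrite colorsE has_map; apply: eq_in_has => p pD /=.
by rewrite H // eq_sym -val_aff (inj_eq val_inj).
Qed.

Lemma u_nonzero D (f : nat -> 'Z_11) (x u : 'Z_11) (K : seq nat) :
  nontrivial_coloring 11 D f ->
  (forall p, p \in dn D -> f (labn D p) = x + u *+ nth 0%N K (labn D p)) -> u != 0.
Proof.
move=> [_ [z [w ne]]] H; apply: contra ne => /eqP u0.
by rewrite !dlabE !H ?vz_dn // u0 !mul0rn.
Qed.

Definition sepchk (K1 K2 : seq nat) : bool :=
  all (fun x1 => all (fun u1 => all (fun x2 => all (fun u2 =>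
    (u1 == 0%N) || (u2 == 0%N) ||
    has (fun c => has (fun k => c == ((x1 + u1 * k) %% 11)%N) K1 !=
                  has (fun k => c == ((x2 + u2 * k) %% 11)%N) K2) (iota 0 11))
    (iota 0 11)) (iota 0 11)) (iota 0 11)) (iota 0 11).

Lemma sep_colors D1 D2 (K1 K2 : seq nat) :
  (forall f, fox_coloring 11 D1 f -> exists x u, forall p, p \in dn D1 ->
       f (labn D1 p) = x + u *+ nth 0%N K1 (labn D1 p)) ->
  (forall f, fox_coloring 11 D2 f -> exists x u, forall p, p \in dn D2 ->
       f (labn D2 p) = x + u *+ nth 0%N K2 (labn D2 p)) ->
  sepchk (undup (map (fun p => nth 0%N K1 (labn D1 p)) (dn D1)))
         (undup (map (fun p => nth 0%N K2 (labn D2 p)) (dn D2))) ->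
  forall f1 f2, nontrivial_coloring 11 D1 f1 -> nontrivial_coloring 11 D2 f2 ->
    colors 11 D1 f1 != colors 11 D2 f2.
Proof.
move=> C1 C2 chk f1 f2 n1 n2.
have [x1 [u1 H1]] := C1 f1 n1.1; have [x2 [u2 H2]] := C2 f2 n2.1.
have nu1 := u_nonzero n1 H1; have nu2 := u_nonzero n2 H2.
apply/negP => /eqP E.
move: chk => /allP /(_ (nat_of_ord x1)); rewrite mem_iota ltn_ord => /(_ isT).
move=> /allP /(_ (nat_of_ord u1)); rewrite mem_iota ltn_ord => /(_ isT).
move=> /allP /(_ (nat_of_ord x2)); rewrite mem_iota ltn_ord => /(_ isT).
move=> /allP /(_ (nat_of_ord u2)); rewrite mem_iota ltn_ord => /(_ isT).
have nz : forall v : 'Z_11, v != 0 -> (nat_of_ord v == 0%N) = false.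
  by move=> v; apply: contraNF => /eqP v0; apply/eqP; apply: val_inj.
rewrite (nz _ nu1) (nz _ nu2) !orFb => /hasP [c]; rewrite mem_iota add0n => /andP [_ c11].
have := colors_aff H1 (inZp c); have := colors_aff H2 (inZp c).
rewrite E => ->; rewrite /= modn_small // !has_undup => ->.
by rewrite eqxx.
Qed.

End Sec_F.

Definition D62_0 : pd := [:: (1,4,2,5); (5,10,6,11); (3,9,4,8); (9,3,10,2); (7,12,8,1); (11,6,12,7)].
Definition D62_1 : pd := [:: (7,12,8,1); (4,8,3,9); (6,11,5,10); (9,3,10,2); (11,6,12,7); (2,5,1,4)].
Definition D62_2 : pd := [:: (6,14,14,13); (7,12,8,1); (4,8,3,9); (6,11,5,10); (9,3,10,2); (11,13,12,7); (2,5,1,4)].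
Definition D62_3 : pd := [:: (12,7,11,13); (14,13,6,14); (6,11,5,10); (2,5,1,4); (7,12,8,1); (4,8,3,9); (9,3,10,2)].
Definition D62_4 : pd := [:: (10,14,11,13); (5,13,6,7); (6,11,14,12); (2,5,1,4); (7,12,8,1); (4,8,3,9); (9,3,10,2)].
Definition D62_5 : pd := [:: (10,14,11,13); (5,13,6,7); (6,11,14,12); (2,5,1,4); (7,12,8,1); (4,8,3,9); (9,3,10,2)].
Definition D62_6 : pd := [:: (4,15,16,16); (10,14,11,13); (5,13,6,7); (6,11,14,12); (2,5,1,15); (7,12,8,1); (4,8,3,9); (9,3,10,2)].
Definition D62_7 : pd := [:: (13,2,20,19); (20,17,18,19); (4,15,16,16); (10,14,11,18); (5,13,6,7); (6,11,14,12); (2,5,1,15); (7,12,8,1); (4,8,3,9); (9,3,10,17)].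
Definition D62_8 : pd := [:: (4,15,16,16); (13,2,20,19); (20,17,18,19); (10,14,11,18); (5,13,6,7); (6,11,14,12); (2,5,1,15); (7,12,8,1); (4,8,3,9); (9,3,10,17)].
Definition D62_9 : pd := [:: (13,2,20,19); (20,17,18,19); (10,14,11,18); (5,13,6,7); (6,11,14,12); (2,5,1,4); (7,12,8,1); (4,8,3,9); (9,3,10,17)].
Definition D62_10 : pd := [:: (20,17,18,19); (10,17,9,3); (11,18,10,14); (13,2,20,19); (5,13,6,7); (6,11,14,12); (2,5,1,4); (7,12,8,1); (4,8,3,9)].
Definition D62_11 : pd := [:: (14,17,18,3); (10,17,11,19); (9,18,10,20); (13,2,20,19); (5,13,6,7); (6,11,14,12); (2,5,1,4); (7,12,8,1); (4,8,3,9)].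
Definition D62 : pd := D62_11.
Lemma D62_chain : pd_equiv D62_0 D62.
Proof.
have s0 : pd_equiv D62_0 D62_1.
  apply: pe_step; [vm_compute; reflexivity|vm_compute; reflexivity|apply: (@isoI _ _ [:: true; true; true; false; false; false]); vm_compute; reflexivity].
have s1 : pd_equiv D62_1 D62_2.
  apply: pe_step; [vm_compute; reflexivity|vm_compute; reflexivity|apply: (@R1I _ _ [:: (7,12,8,1); (4,8,3,9); (6,11,5,10); (9,3,10,2); (11,13,12,7); (2,5,1,4)] 6 13 14); vm_compute; reflexivity].
have s2 : pd_equiv D62_2 D62_3.
  apply: pe_step; [vm_compute; reflexivity|vm_compute; reflexivity|apply: (@isoI _ _ [:: true; false; false; false; false; true; false]); vm_compute; reflexivity].
have s3 : pd_equiv D62_3 D62_4.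
  apply: pe_step; [vm_compute; reflexivity|vm_compute; reflexivity|apply: (@R3aI _ _ [:: (2,5,1,4); (7,12,8,1); (4,8,3,9); (9,3,10,2)] 7 14 12 10 14 5 13 11 6); vm_compute; reflexivity].
have s4 : pd_equiv D62_4 D62_5.
  apply: pe_step; [vm_compute; reflexivity|vm_compute; reflexivity|apply: (@isoI _ _ [:: false; false; false; false; false; false; false]); vm_compute; reflexivity].
have s5 : pd_equiv D62_5 D62_6.
  apply: pe_step; [vm_compute; reflexivity|vm_compute; reflexivity|apply: (@R1I _ _ [:: (10,14,11,13); (5,13,6,7); (6,11,14,12); (2,5,1,15); (7,12,8,1); (4,8,3,9); (9,3,10,2)] 4 15 16); vm_compute; reflexivity].
have s6 : pd_equiv D62_6 D62_7.
  apply: pe_step; [vm_compute; reflexivity|vm_compute; reflexivity|apply: (@R2I _ _ [:: (4,15,16,16); (10,14,11,18); (5,13,6,7); (6,11,14,12); (2,5,1,15); (7,12,8,1); (4,8,3,9); (9,3,10,17)] 2 17 13 18 19 20); vm_compute; reflexivity].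
have s7 : pd_equiv D62_7 D62_8.
  apply: pe_step; [vm_compute; reflexivity|vm_compute; reflexivity|apply: (@isoI _ _ [:: false; false; false; false; false; false; false; false; false; false]); vm_compute; reflexivity].
have s8 : pd_equiv D62_8 D62_9.
  apply: pe_stepb; [vm_compute; reflexivity|vm_compute; reflexivity|apply: (@R1I _ _ [:: (13,2,20,19); (20,17,18,19); (10,14,11,18); (5,13,6,7); (6,11,14,12); (2,5,1,15); (7,12,8,1); (4,8,3,9); (9,3,10,17)] 4 15 16); vm_compute; reflexivity].
have s9 : pd_equiv D62_9 D62_10.
  apply: pe_step; [vm_compute; reflexivity|vm_compute; reflexivity|apply: (@isoI _ _ [:: false; false; true; false; false; false; false; false; true]); vm_compute; reflexivity].
have s10 : pd_equiv D62_10 D62_11.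
  apply: pe_step; [vm_compute; reflexivity|vm_compute; reflexivity|apply: (@R3bI _ _ [:: (13,2,20,19); (5,13,6,7); (6,11,14,12); (2,5,1,4); (7,12,8,1); (4,8,3,9)] 19 3 20 14 9 11 17 18 10); vm_compute; reflexivity].
exact: (rst_trans _ _ _ _ _ s0 (rst_trans _ _ _ _ _ s1 (rst_trans _ _ _ _ _ s2 (rst_trans _ _ _ _ _ s3 (rst_trans _ _ _ _ _ s4 (rst_trans _ _ _ _ _ s5 (rst_trans _ _ _ _ _ s6 (rst_trans _ _ _ _ _ s7 (rst_trans _ _ _ _ _ s8 (rst_trans _ _ _ _ _ s9 s10)))))))))).
Qed.
Definition KD62 : seq nat := [:: 0; 4; 0; 0; 2; 2; 1; 7; 1; 1; 7; 4; 4; 7; 7; 0; 0; 0; 4; 0; 4].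
Definition fD62 (n : nat) : 'Z_11 := inZp (nth 0 KD62 n).
Lemma fD62_ok : nontrivial_coloring 11 D62 fD62 /\ #|colors 11 D62 fD62| = 5.
Proof.
split; last by rewrite colors_card; vm_compute.
split; first by apply: fox_chk; vm_compute.
by apply: nontriv_chk; vm_compute.
Qed.
Lemma char_D62 (f : nat -> 'Z_11) : fox_coloring 11 D62 f -> exists x u, forall p, p \in dn D62 ->
  f (labn D62 p) = (x + u *+ nth 0%N KD62 (labn D62 p))%R.
Proof.
move=> FC; exists (f 2), (f 8 - f 2)%R.
have [Eo0 Eu0] := FC _ (mem_nth (0,0,0,0) (isT : 0 < size D62)).
have [Eo1 Eu1] := FC _ (mem_nth (0,0,0,0) (isT : 1 < size D62)).
have [Eo2 Eu2] := FC _ (mem_nth (0,0,0,0) (isT : 2 < size D62)).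
have [Eo3 Eu3] := FC _ (mem_nth (0,0,0,0) (isT : 3 < size D62)).
have [Eo4 Eu4] := FC _ (mem_nth (0,0,0,0) (isT : 4 < size D62)).
have [Eo5 Eu5] := FC _ (mem_nth (0,0,0,0) (isT : 5 < size D62)).
have [Eo6 Eu6] := FC _ (mem_nth (0,0,0,0) (isT : 6 < size D62)).
have [Eo7 Eu7] := FC _ (mem_nth (0,0,0,0) (isT : 7 < size D62)).
have [Eo8 Eu8] := FC _ (mem_nth (0,0,0,0) (isT : 8 < size D62)).
have H2 : f 2 = (f 2 + (f 8 - f 2) *+ 0)%R by rewrite mulr0n addr0.
have H8 : f 8 = (f 2 + (f 8 - f 2) *+ 1)%R by rewrite mulr1n addrC subrK.
have H19 := etrans (esym Eo3) H2.
have H9 := etrans (esym Eo8) H8.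
have H17 := etrans Eo1 H19.
have H3 := etrans (esym Eo0) H17.
have H4 := under_step2 H3 H8 Eu8.
have H5 := etrans Eo6 H4.
have H1 := under_step H2 H5 Eu6.
have H12 := etrans Eo7 H1.
have H7 := under_step2 H8 H12 Eu7.
have H13 := etrans Eo4 H7.
have H6 := under_step H5 H13 Eu4.
have H11 := etrans Eo5 H12.
have H14 := under_step H6 H11 Eu5.
have H18 := under_step H14 H17 Eu0.
have H10 := under_step2 H11 H17 Eu1.
have H20 := etrans (esym Eo2) H18.
have LSok : all (fun p => labn D62 p \in [:: 1; 2; 3; 4; 5; 6; 7; 8; 9; 10; 11; 12; 13; 14; 17; 18; 19; 20]) (dn D62) by vm_compute.
move=> p /(allP LSok); move: (labn D62 p) => l; rewrite !inE => Hl.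
case/orP: Hl => [/eqP -> | Hl]; first exact: H1.
case/orP: Hl => [/eqP -> | Hl]; first exact: H2.
case/orP: Hl => [/eqP -> | Hl]; first exact: H3.
case/orP: Hl => [/eqP -> | Hl]; first exact: H4.
case/orP: Hl => [/eqP -> | Hl]; first exact: H5.
case/orP: Hl => [/eqP -> | Hl]; first exact: H6.
case/orP: Hl => [/eqP -> | Hl]; first exact: H7.
case/orP: Hl => [/eqP -> | Hl]; first exact: H8.
case/orP: Hl => [/eqP -> | Hl]; first exact: H9.
case/orP: Hl => [/eqP -> | Hl]; first exact: H10.
case/orP: Hl => [/eqP -> | Hl]; first exact: H11.
case/orP: Hl => [/eqP -> | Hl]; first exact: H12.
case/orP: Hl => [/eqP -> | Hl]; first exact: H13.
case/orP: Hl => [/eqP -> | Hl]; first exact: H14.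
case/orP: Hl => [/eqP -> | Hl]; first exact: H17.
case/orP: Hl => [/eqP -> | Hl]; first exact: H18.
case/orP: Hl => [/eqP -> | Hl]; first exact: H19.
by move/eqP: Hl => ->; exact: H20.
Qed.

Definition D72_0 : pd := [:: (14,5,1,6); (6,13,7,14); (12,7,13,8); (8,11,9,12); (4,1,5,2); (10,3,11,4); (2,9,3,10)].
Definition D72_1 : pd := [:: (10,3,11,4); (14,5,1,6); (6,13,7,14); (12,7,13,8); (8,11,9,12); (4,1,5,2); (2,9,3,10)].
Definition D72_2 : pd := [:: (8,15,16,16); (10,3,11,4); (14,5,1,6); (6,13,7,14); (12,7,13,8); (15,11,9,12); (4,1,5,2); (2,9,3,10)].
Definition D72_3 : pd := [:: (1,13,20,19); (20,17,18,19); (8,15,16,16); (10,3,11,4); (14,5,18,6); (6,17,7,14); (12,7,13,8); (15,11,9,12); (4,1,5,2); (2,9,3,10)].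
Definition D72_4 : pd := [:: (7,14,6,17); (20,17,18,19); (18,6,14,5); (1,13,20,19); (8,15,16,16); (10,3,11,4); (12,7,13,8); (15,11,9,12); (4,1,5,2); (2,9,3,10)].
Definition D72_5 : pd := [:: (5,19,6,17); (14,17,18,14); (18,6,20,7); (1,13,20,19); (8,15,16,16); (10,3,11,4); (12,7,13,8); (15,11,9,12); (4,1,5,2); (2,9,3,10)].
Definition D72_6 : pd := [:: (20,19,1,13); (5,19,6,17); (4,1,5,2); (14,17,18,14); (18,6,20,7); (8,15,16,16); (10,3,11,4); (12,7,13,8); (15,11,9,12); (2,9,3,10)].
Definition D72_7 : pd := [:: (2,19,1,17); (5,19,4,13); (6,1,5,20); (14,17,18,14); (18,6,20,7); (8,15,16,16); (10,3,11,4); (12,7,13,8); (15,11,9,12); (2,9,3,10)].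
Definition D72_8 : pd := [:: (13,21,22,22); (2,19,1,17); (5,19,4,21); (6,1,5,20); (14,17,18,14); (18,6,20,7); (8,15,16,16); (10,3,11,4); (12,7,13,8); (15,11,9,12); (2,9,3,10)].
Definition D72_9 : pd := [:: (18,14,14,17); (13,21,22,22); (2,19,1,17); (5,19,4,21); (6,1,5,20); (18,6,20,7); (8,15,16,16); (10,3,11,4); (12,7,13,8); (15,11,9,12); (2,9,3,10)].
Definition D72_10 : pd := [:: (13,21,22,22); (2,19,1,18); (5,19,4,21); (6,1,5,20); (18,6,20,7); (8,15,16,16); (10,3,11,4); (12,7,13,8); (15,11,9,12); (2,9,3,10)].
Definition D72_11 : pd := [:: (2,19,1,18); (5,19,4,13); (6,1,5,20); (18,6,20,7); (8,15,16,16); (10,3,11,4); (12,7,13,8); (15,11,9,12); (2,9,3,10)].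
Definition D72_12 : pd := [:: (8,15,16,16); (2,19,1,18); (5,19,4,13); (6,1,5,20); (18,6,20,7); (10,3,11,4); (12,7,13,8); (15,11,9,12); (2,9,3,10)].
Definition D72_13 : pd := [:: (2,19,1,18); (5,19,4,13); (6,1,5,20); (18,6,20,7); (10,3,11,4); (12,7,13,8); (8,11,9,12); (2,9,3,10)].
Definition D72_14 : pd := [:: (2,19,1,18); (5,19,4,13); (6,1,5,20); (18,6,20,7); (10,3,11,4); (12,7,13,8); (8,11,9,12); (2,9,3,10)].
Definition D72_15 : pd := [:: (20,7,24,23); (24,21,22,23); (2,19,1,18); (5,19,4,13); (6,1,5,20); (18,6,22,21); (10,3,11,4); (12,7,13,8); (8,11,9,12); (2,9,3,10)].
Definition D72_16 : pd := [:: (9,18,28,27); (28,25,26,27); (20,7,24,23); (24,21,22,23); (2,19,1,18); (5,19,4,13); (6,1,5,20); (25,6,22,21); (10,3,11,4); (12,7,13,8); (8,11,26,12); (2,9,3,10)].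
Definition D72_17 : pd := [:: (25,30,30,29); (9,18,28,27); (28,25,26,27); (20,7,24,23); (24,21,22,23); (2,19,1,18); (5,19,4,13); (6,1,5,20); (29,6,22,21); (10,3,11,4); (12,7,13,8); (8,11,26,12); (2,9,3,10)].
Definition D72_18 : pd := [:: (7,32,32,31); (25,30,30,29); (9,18,28,27); (28,25,26,27); (20,7,24,23); (24,21,22,23); (2,19,1,18); (5,19,4,13); (6,1,5,20); (29,6,22,21); (10,3,11,4); (12,31,13,8); (8,11,26,12); (2,9,3,10)].
Definition D72_19 : pd := [:: (28,27,9,18); (1,18,2,19); (2,9,3,10); (7,32,32,31); (25,30,30,29); (28,25,26,27); (20,7,24,23); (24,21,22,23); (5,19,4,13); (6,1,5,20); (29,6,22,21); (10,3,11,4); (12,31,13,8); (8,11,26,12)].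
Definition D72_20 : pd := [:: (10,19,9,18); (3,18,2,27); (2,9,1,28); (7,32,32,31); (25,30,30,29); (28,25,26,27); (20,7,24,23); (24,21,22,23); (5,19,4,13); (6,1,5,20); (29,6,22,21); (10,3,11,4); (12,31,13,8); (8,11,26,12)].
Definition D72 : pd := D72_20.
Lemma D72_chain : pd_equiv D72_0 D72.
Proof.
have s0 : pd_equiv D72_0 D72_1.
  apply: pe_step; [vm_compute; reflexivity|vm_compute; reflexivity|apply: (@isoI _ _ [:: false; false; false; false; false; false; false]); vm_compute; reflexivity].
have s1 : pd_equiv D72_1 D72_2.
  apply: pe_step; [vm_compute; reflexivity|vm_compute; reflexivity|apply: (@R1I _ _ [:: (10,3,11,4); (14,5,1,6); (6,13,7,14); (12,7,13,8); (15,11,9,12); (4,1,5,2); (2,9,3,10)] 8 15 16); vm_compute; reflexivity].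
have s2 : pd_equiv D72_2 D72_3.
  apply: pe_step; [vm_compute; reflexivity|vm_compute; reflexivity|apply: (@R2I _ _ [:: (8,15,16,16); (10,3,11,4); (14,5,18,6); (6,17,7,14); (12,7,13,8); (15,11,9,12); (4,1,5,2); (2,9,3,10)] 13 17 1 18 19 20); vm_compute; reflexivity].
have s3 : pd_equiv D72_3 D72_4.
  apply: pe_step; [vm_compute; reflexivity|vm_compute; reflexivity|apply: (@isoI _ _ [:: false; false; false; false; true; true; false; false; false; false]); vm_compute; reflexivity].
have s4 : pd_equiv D72_4 D72_5.
  apply: pe_step; [vm_compute; reflexivity|vm_compute; reflexivity|apply: (@R3aI _ _ [:: (1,13,20,19); (8,15,16,16); (10,3,11,4); (12,7,13,8); (15,11,9,12); (4,1,5,2); (2,9,3,10)] 14 19 7 5 20 14 17 6 18); vm_compute; reflexivity].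
have s5 : pd_equiv D72_5 D72_6.
  apply: pe_step; [vm_compute; reflexivity|vm_compute; reflexivity|apply: (@isoI _ _ [:: false; false; false; true; false; false; false; false; false; false]); vm_compute; reflexivity].
have s6 : pd_equiv D72_6 D72_7.
  apply: pe_step; [vm_compute; reflexivity|vm_compute; reflexivity|apply: (@R3bI _ _ [:: (14,17,18,14); (18,6,20,7); (8,15,16,16); (10,3,11,4); (12,7,13,8); (15,11,9,12); (2,9,3,10)] 13 17 20 2 6 4 19 1 5); vm_compute; reflexivity].
have s7 : pd_equiv D72_7 D72_8.
  apply: pe_step; [vm_compute; reflexivity|vm_compute; reflexivity|apply: (@R1I _ _ [:: (2,19,1,17); (5,19,4,21); (6,1,5,20); (14,17,18,14); (18,6,20,7); (8,15,16,16); (10,3,11,4); (12,7,13,8); (15,11,9,12); (2,9,3,10)] 13 21 22); vm_compute; reflexivity].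
have s8 : pd_equiv D72_8 D72_9.
  apply: pe_step; [vm_compute; reflexivity|vm_compute; reflexivity|apply: (@isoI _ _ [:: false; false; false; false; true; false; false; false; false; false; false]); vm_compute; reflexivity].
have s9 : pd_equiv D72_9 D72_10.
  apply: pe_stepb; [vm_compute; reflexivity|vm_compute; reflexivity|apply: (@R1I _ _ [:: (13,21,22,22); (2,19,1,17); (5,19,4,21); (6,1,5,20); (18,6,20,7); (8,15,16,16); (10,3,11,4); (12,7,13,8); (15,11,9,12); (2,9,3,10)] 18 17 14); vm_compute; reflexivity].
have s10 : pd_equiv D72_10 D72_11.
  apply: pe_stepb; [vm_compute; reflexivity|vm_compute; reflexivity|apply: (@R1I _ _ [:: (2,19,1,18); (5,19,4,21); (6,1,5,20); (18,6,20,7); (8,15,16,16); (10,3,11,4); (12,7,13,8); (15,11,9,12); (2,9,3,10)] 13 21 22); vm_compute; reflexivity].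
have s11 : pd_equiv D72_11 D72_12.
  apply: pe_step; [vm_compute; reflexivity|vm_compute; reflexivity|apply: (@isoI _ _ [:: false; false; false; false; false; false; false; false; false]); vm_compute; reflexivity].
have s12 : pd_equiv D72_12 D72_13.
  apply: pe_stepb; [vm_compute; reflexivity|vm_compute; reflexivity|apply: (@R1I _ _ [:: (2,19,1,18); (5,19,4,13); (6,1,5,20); (18,6,20,7); (10,3,11,4); (12,7,13,8); (15,11,9,12); (2,9,3,10)] 8 15 16); vm_compute; reflexivity].
have s13 : pd_equiv D72_13 D72_14.
  apply: pe_step; [vm_compute; reflexivity|vm_compute; reflexivity|apply: (@isoI _ _ [:: false; false; false; false; false; false; false; false]); vm_compute; reflexivity].
have s14 : pd_equiv D72_14 D72_15.
  apply: pe_step; [vm_compute; reflexivity|vm_compute; reflexivity|apply: (@R2I _ _ [:: (2,19,1,18); (5,19,4,13); (6,1,5,20); (18,6,22,21); (10,3,11,4); (12,7,13,8); (8,11,9,12); (2,9,3,10)] 7 21 20 22 23 24); vm_compute; reflexivity].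
have s15 : pd_equiv D72_15 D72_16.
  apply: pe_step; [vm_compute; reflexivity|vm_compute; reflexivity|apply: (@R2I _ _ [:: (20,7,24,23); (24,21,22,23); (2,19,1,18); (5,19,4,13); (6,1,5,20); (25,6,22,21); (10,3,11,4); (12,7,13,8); (8,11,26,12); (2,9,3,10)] 18 25 9 26 27 28); vm_compute; reflexivity].
have s16 : pd_equiv D72_16 D72_17.
  apply: pe_step; [vm_compute; reflexivity|vm_compute; reflexivity|apply: (@R1I _ _ [:: (9,18,28,27); (28,25,26,27); (20,7,24,23); (24,21,22,23); (2,19,1,18); (5,19,4,13); (6,1,5,20); (29,6,22,21); (10,3,11,4); (12,7,13,8); (8,11,26,12); (2,9,3,10)] 25 29 30); vm_compute; reflexivity].
have s17 : pd_equiv D72_17 D72_18.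
  apply: pe_step; [vm_compute; reflexivity|vm_compute; reflexivity|apply: (@R1I _ _ [:: (25,30,30,29); (9,18,28,27); (28,25,26,27); (20,7,24,23); (24,21,22,23); (2,19,1,18); (5,19,4,13); (6,1,5,20); (29,6,22,21); (10,3,11,4); (12,31,13,8); (8,11,26,12); (2,9,3,10)] 7 31 32); vm_compute; reflexivity].
have s18 : pd_equiv D72_18 D72_19.
  apply: pe_step; [vm_compute; reflexivity|vm_compute; reflexivity|apply: (@isoI _ _ [:: false; false; true; false; false; false; true; false; false; false; false; false; false; false]); vm_compute; reflexivity].
have s19 : pd_equiv D72_19 D72_20.
  apply: pe_step; [vm_compute; reflexivity|vm_compute; reflexivity|apply: (@R3aI _ _ [:: (7,32,32,31); (25,30,30,29); (28,25,26,27); (20,7,24,23); (24,21,22,23); (5,19,4,13); (6,1,5,20); (29,6,22,21); (10,3,11,4); (12,31,13,8); (8,11,26,12)] 27 19 28 10 1 3 18 9 2); vm_compute; reflexivity].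
exact: (rst_trans _ _ _ _ _ s0 (rst_trans _ _ _ _ _ s1 (rst_trans _ _ _ _ _ s2 (rst_trans _ _ _ _ _ s3 (rst_trans _ _ _ _ _ s4 (rst_trans _ _ _ _ _ s5 (rst_trans _ _ _ _ _ s6 (rst_trans _ _ _ _ _ s7 (rst_trans _ _ _ _ _ s8 (rst_trans _ _ _ _ _ s9 (rst_trans _ _ _ _ _ s10 (rst_trans _ _ _ _ _ s11 (rst_trans _ _ _ _ _ s12 (rst_trans _ _ _ _ _ s13 (rst_trans _ _ _ _ _ s14 (rst_trans _ _ _ _ _ s15 (rst_trans _ _ _ _ _ s16 (rst_trans _ _ _ _ _ s17 (rst_trans _ _ _ _ _ s18 s19))))))))))))))))))).
Qed.
Definition KD72 : seq nat := [:: 0; 0; 10; 5; 5; 10; 1; 1; 1; 5; 10; 0; 0; 2; 0; 0; 0; 0; 2; 2; 0; 1; 0; 1; 2; 2; 10; 2; 5; 2; 2; 1; 1].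
Definition fD72 (n : nat) : 'Z_11 := inZp (nth 0 KD72 n).
Lemma fD72_ok : nontrivial_coloring 11 D72 fD72 /\ #|colors 11 D72 fD72| = 5.
Proof.
split; last by rewrite colors_card; vm_compute.
split; first by apply: fox_chk; vm_compute.
by apply: nontriv_chk; vm_compute.
Qed.
Lemma char_D72 (f : nat -> 'Z_11) : fox_coloring 11 D72 f -> exists x u, forall p, p \in dn D72 ->
  f (labn D72 p) = (x + u *+ nth 0%N KD72 (labn D72 p))%R.
Proof.
move=> FC; exists (f 1), (f 8 - f 1)%R.
have [Eo0 Eu0] := FC _ (mem_nth (0,0,0,0) (isT : 0 < size D72)).
have [Eo1 Eu1] := FC _ (mem_nth (0,0,0,0) (isT : 1 < size D72)).
have [Eo2 Eu2] := FC _ (mem_nth (0,0,0,0) (isT : 2 < size D72)).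
have [Eo3 Eu3] := FC _ (mem_nth (0,0,0,0) (isT : 3 < size D72)).
have [Eo4 Eu4] := FC _ (mem_nth (0,0,0,0) (isT : 4 < size D72)).
have [Eo5 Eu5] := FC _ (mem_nth (0,0,0,0) (isT : 5 < size D72)).
have [Eo6 Eu6] := FC _ (mem_nth (0,0,0,0) (isT : 6 < size D72)).
have [Eo7 Eu7] := FC _ (mem_nth (0,0,0,0) (isT : 7 < size D72)).
have [Eo8 Eu8] := FC _ (mem_nth (0,0,0,0) (isT : 8 < size D72)).
have [Eo9 Eu9] := FC _ (mem_nth (0,0,0,0) (isT : 9 < size D72)).
have [Eo10 Eu10] := FC _ (mem_nth (0,0,0,0) (isT : 10 < size D72)).
have [Eo11 Eu11] := FC _ (mem_nth (0,0,0,0) (isT : 11 < size D72)).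
have [Eo12 Eu12] := FC _ (mem_nth (0,0,0,0) (isT : 12 < size D72)).
have [Eo13 Eu13] := FC _ (mem_nth (0,0,0,0) (isT : 13 < size D72)).
have H1 : f 1 = (f 1 + (f 8 - f 1) *+ 0)%R by rewrite mulr0n addr0.
have H8 : f 8 = (f 1 + (f 8 - f 1) *+ 1)%R by rewrite mulr1n addrC subrK.
have H20 := etrans (esym Eo9) H1.
have H31 := etrans Eo12 H8.
have H32 := etrans Eo3 H31.
have H7 := under_step2 H32 H32 Eu3.
have H23 := etrans (esym Eo6) H7.
have H24 := under_step H20 H7 Eu6.
have H21 := etrans Eo7 H23.
have H22 := under_step H24 H21 Eu7.
have H6 := etrans Eo10 H21.
have H29 := under_step2 H22 H6 Eu10.
have H30 := etrans Eo4 H29.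
have H25 := under_step2 H30 H30 Eu4.
have H27 := etrans (esym Eo5) H25.
have H5 := under_step H6 H1 Eu9.
have H18 := etrans Eo1 H27.
have H19 := etrans Eo0 H18.
have H13 := etrans (esym Eo8) H19.
have H4 := under_step H5 H19 Eu8.
have H3 := etrans Eo11 H4.
have H12 := under_step2 H13 H31 Eu12.
have H11 := etrans Eo13 H12.
have H26 := under_step H8 H11 Eu13.
have H2 := under_step H3 H18 Eu1.
have H28 := under_step2 H26 H25 Eu5.
have H10 := under_step2 H11 H3 Eu11.
have H9 := under_step H10 H19 Eu0.
have LSok : all (fun p => labn D72 p \in [:: 1; 2; 3; 4; 5; 6; 7; 8; 9; 10; 11; 12; 13; 18; 19; 20; 21; 22; 23; 24; 25; 26; 27; 28; 29; 30; 31; 32]) (dn D72) by vm_compute.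
move=> p /(allP LSok); move: (labn D72 p) => l; rewrite !inE => Hl.
case/orP: Hl => [/eqP -> | Hl]; first exact: H1.
case/orP: Hl => [/eqP -> | Hl]; first exact: H2.
case/orP: Hl => [/eqP -> | Hl]; first exact: H3.
case/orP: Hl => [/eqP -> | Hl]; first exact: H4.
case/orP: Hl => [/eqP -> | Hl]; first exact: H5.
case/orP: Hl => [/eqP -> | Hl]; first exact: H6.
case/orP: Hl => [/eqP -> | Hl]; first exact: H7.
case/orP: Hl => [/eqP -> | Hl]; first exact: H8.
case/orP: Hl => [/eqP -> | Hl]; first exact: H9.
case/orP: Hl => [/eqP -> | Hl]; first exact: H10.
case/orP: Hl => [/eqP -> | Hl]; first exact: H11.
case/orP: Hl => [/eqP -> | Hl]; first exact: H12.
case/orP: Hl => [/eqP -> | Hl]; first exact: H13.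
case/orP: Hl => [/eqP -> | Hl]; first exact: H18.
case/orP: Hl => [/eqP -> | Hl]; first exact: H19.
case/orP: Hl => [/eqP -> | Hl]; first exact: H20.
case/orP: Hl => [/eqP -> | Hl]; first exact: H21.
case/orP: Hl => [/eqP -> | Hl]; first exact: H22.
case/orP: Hl => [/eqP -> | Hl]; first exact: H23.
case/orP: Hl => [/eqP -> | Hl]; first exact: H24.
case/orP: Hl => [/eqP -> | Hl]; first exact: H25.
case/orP: Hl => [/eqP -> | Hl]; first exact: H26.
case/orP: Hl => [/eqP -> | Hl]; first exact: H27.
case/orP: Hl => [/eqP -> | Hl]; first exact: H28.
case/orP: Hl => [/eqP -> | Hl]; first exact: H29.
case/orP: Hl => [/eqP -> | Hl]; first exact: H30.
case/orP: Hl => [/eqP -> | Hl]; first exact: H31.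
by move/eqP: Hl => ->; exact: H32.
Qed.

Lemma kdK62 : knot_diagram K6_2. Proof. by apply: kdb_sound; vm_compute. Qed.
Lemma kdK62m : knot_diagram (map mirror K6_2). Proof. by apply: kdb_sound; vm_compute. Qed.
Lemma kdK72 : knot_diagram K7_2. Proof. by apply: kdb_sound; vm_compute. Qed.
Lemma kdK72m : knot_diagram (map mirror K7_2). Proof. by apply: kdb_sound; vm_compute. Qed.

Lemma dof62 : diagram_of K6_2 D62.
Proof. left; exact: (rst_sym _ _ _ _ D62_chain). Qed.
Lemma dof72 : diagram_of K7_2 D72.
Proof. left; exact: (rst_sym _ _ _ _ D72_chain). Qed.

Lemma mincol62 : is_mincol 11 K6_2 5.
Proof.
split; first by exists D62, fD62; have [h1 h2] := fD62_ok; split => //; exact: dof62.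
move=> D f dD nf; apply: lower5 nf; exact: diagram_kd kdK62 kdK62m dD.
Qed.

Lemma mincol72 : is_mincol 11 K7_2 5.
Proof.
split; first by exists D72, fD72; have [h1 h2] := fD72_ok; split => //; exact: dof72.
move=> D f dD nf; apply: lower5 nf; exact: diagram_kd kdK72 kdK72m dD.
Qed.

Lemma sep6272 : forall f1 f2, nontrivial_coloring 11 D62 f1 -> nontrivial_coloring 11 D72 f2 ->
    colors 11 D62 f1 != colors 11 D72 f2.
Proof. apply: sep_colors (@char_D62) (@char_D72) _; vm_compute; reflexivity. Qed.

Theorem theorem3p1 :
  [/\ pd_det K6_2 = 11, pd_det K7_2 = 11,
      is_mincol 11 K6_2 5, is_mincol 11 K7_2 5 &
      exists D1 D2 : pd,
        [/\ diagram_of K6_2 D1, diagram_of K7_2 D2,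
            (exists f : nat -> 'Z_11,
               nontrivial_coloring 11 D1 f /\ #|colors 11 D1 f| = 5),
            (exists f : nat -> 'Z_11,
               nontrivial_coloring 11 D2 f /\ #|colors 11 D2 f| = 5) &
            (forall f1 : nat -> 'Z_11,
               nontrivial_coloring 11 D1 f1 -> #|colors 11 D1 f1| = 5 ->
               forall f2 : nat -> 'Z_11, nontrivial_coloring 11 D2 f2 ->
                 colors 11 D2 f2 != colors 11 D1 f1) /\
            (forall f2 : nat -> 'Z_11,
               nontrivial_coloring 11 D2 f2 -> #|colors 11 D2 f2| = 5 ->
               forall f1 : nat -> 'Z_11, nontrivial_coloring 11 D1 f1 ->
                 colors 11 D1 f1 != colors 11 D2 f2)]].
Proof.
split; [exact: det62 | exact: det72 | exact: mincol62 | exact: mincol72 |].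
exists D62, D72; split; [exact: dof62 | exact: dof72 | by exists fD62; exact: fD62_ok
  | by exists fD72; exact: fD72_ok | split].
- by move=> f1 n1 _ f2 n2; rewrite eq_sym; apply: sep6272.
- by move=> f2 n2 _ f1 n1; apply: sep6272.
Qed.
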